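(* Let $n\geqslant2$, $\lambda>0$, distinct points $p_1,\ldots,p_M\in\mathbb{Z}^n$ and positive integers $n_1,\ldots,n_M$ be given, let $g=4\pi\sum_{j=1}^Mn_j\delta_{p_j}$ and $C=4\pi\sum_{j=1}^Mn_j$. Let $\Omega_0\subset\mathbb{Z}^n$ be a finite set containing $\{p_j\}_{j=1}^M$ and let $\Omega$ be a finite connected subset with $\Omega_0\subset\Omega$. Fix $K>2\lambda$, let $u_0=0$ and for $k\geqslant1$ let $u_k:\overline\Omega\to\mathbb{R}$ be the (unique) solution of $$(\Delta-K)u_k=\lambda e^{u_{k-1}}(e^{u_{k-1}}-1)+g-Ku_{k-1}\ \text{ on }\Omega,\qquad u_k=0\ \text{ on }\delta\Omega.$$ Define, for $u:\overline\Omega\to\mathbb{R}$, $$F(u)=\frac12D_\Omega(u)+\sum_{x\in\Omega}\Big[\frac\lambda2(e^{u(x)}-1)^2+g(x)u(x)\Big].$$ Then $c_0\geqslant F(u_1)\geqslant F(u_2)\geqslant\cdots\geqslant F(u_k)\geqslant\cdots$, where the constant $c_0$ depends only on $n$, $C$ and $\lambda$.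
   Context: $\mathbb{Z}^n$ is the integer lattice graph with $x\sim y$ iff $\sum_i|x_i-y_i|=1$. For a finite $\Omega\subset\mathbb{Z}^n$, $\delta\Omega=\{y\in\mathbb{Z}^n\setminus\Omega:\exists x\in\Omega,\ y\sim x\}$ and $\overline\Omega=\Omega\cup\delta\Omega$. For $u:\overline\Omega\to\mathbb{R}$ and $x\in\Omega$, $\Delta u(x)=\sum_{y\sim x}(u(y)-u(x))$. $\delta_p$ is the function equal to $1$ at $p$ and $0$ elsewhere. With $\nabla_{xy}f=f(y)-f(x)$, the Dirichlet energy on $\Omega$ is $D_\Omega(f)=\frac12\sum_{x,y\in\Omega,\,x\sim y}(\nabla_{xy}f)^2+\sum_{x\in\Omega,\,y\in\delta\Omega,\,x\sim y}(\nabla_{xy}f)^2$. *)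

(* Defs.v *)
From HB Require Import structures.
From mathcomp Require Import all_boot all_order all_algebra.
From mathcomp Require Import all_classical all_reals all_analysis.
Set Implicit Arguments. Unset Strict Implicit. Unset Printing Implicit Defensive.
Import Order.TTheory GRing.Theory Num.Theory.
Local Open Scope ring_scope.

Definition pt (n : nat) := {ffun 'I_n -> int}.

Definition adj n (x y : pt n) : bool := (\sum_(i < n) `|x i - y i|%N == 1)%N.

Definition shift n (x : pt n) (i : 'I_n) (s : int) : pt n :=
  [ffun j => if j == i then x j + s else x j].
Definition nbrs n (x : pt n) : seq (pt n) :=
  [seq shift x i 1 | i <- enum 'I_n] ++ [seq shift x i (-1) | i <- enum 'I_n].

(* Finite subsets of Z^n are duplicate-free lists. *)
Definition bdry n (Om : seq (pt n)) : seq (pt n) :=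
  undup [seq y <- flatten (map (@nbrs n) Om) | y \notin Om].
Definition lat_closure n (Om : seq (pt n)) : seq (pt n) := Om ++ bdry Om.

Definition lat_connected n (Om : seq (pt n)) : Prop :=
  forall x y, x \in Om -> y \in Om ->
    exists s : seq (pt n), [/\ all (mem Om) s, path (@adj n) x s & last x s = y].

Section Ops.
Variable R : realType.

(* Delta u (x) = sum_{y ~ x} (u y - u x)  (all neighbours of x in Omega lie in closure) *)
Definition lat_lap n (Om : seq (pt n)) (u : pt n -> R) (x : pt n) : R :=
  \sum_(y <- lat_closure Om | adj x y) (u y - u x).

Definition dirichlet n (Om : seq (pt n)) (f : pt n -> R) : R :=
  2^-1 * (\sum_(x <- Om) \sum_(y <- Om | adj x y) (f y - f x) ^+ 2)
  + \sum_(x <- Om) \sum_(y <- bdry Om | adj x y) (f y - f x) ^+ 2.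

Definition gsrc n M (p : 'I_M -> pt n) (m : 'I_M -> nat) (x : pt n) : R :=
  4 * pi * \sum_(j < M) (m j)%:R * (x == p j)%:R.

Definition energyF n (Om : seq (pt n)) (lam : R) (g : pt n -> R) (u : pt n -> R) : R :=
  2^-1 * dirichlet Om u
  + \sum_(x <- Om) (lam / 2 * (expR (u x) - 1) ^+ 2 + g x * u x).
End Ops.

(* Main.v *)
Require Import Defs.
From HB Require Import structures.
From mathcomp Require Import all_boot all_order all_algebra.
From mathcomp Require Import all_classical all_reals all_analysis.
From mathcomp Require Import ring lra.
Import Order.TTheory GRing.Theory Num.Theory.
Local Open Scope ring_scope.

Section Aux.
Variable R : realType.
Variable n : nat.
Variable Om : seq (pt n).

Lemma sumB (I : Type) (r : seq I) (P : pred I) (F1 F2 : I -> R) :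
  \sum_(i <- r | P i) (F1 i - F2 i) = \sum_(i <- r | P i) F1 i - \sum_(i <- r | P i) F2 i.
Proof. by rewrite big_split /= sumrN. Qed.

Definition Q (phi : pt n -> pt n -> R) : R :=
  2^-1 * (\sum_(x <- Om) \sum_(y <- Om | adj x y) phi x y)
  + \sum_(x <- Om) \sum_(y <- bdry Om | adj x y) phi x y.

Lemma QD phi1 phi2 : Q (fun x y => phi1 x y + phi2 x y) = Q phi1 + Q phi2.
Proof.
rewrite /Q.
have E : forall r : seq (pt n), \sum_(x <- Om) \sum_(y <- r | adj x y) (phi1 x y + phi2 x y)
  = \sum_(x <- Om) \sum_(y <- r | adj x y) phi1 x y + \sum_(x <- Om) \sum_(y <- r | adj x y) phi2 x y.
  by move=> r; rewrite -big_split; apply: eq_bigr => x _; rewrite big_split.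
rewrite !E; lra.
Qed.

Lemma QZ c phi : Q (fun x y => c * phi x y) = c * Q phi.
Proof.
rewrite /Q.
have E : forall r : seq (pt n), \sum_(x <- Om) \sum_(y <- r | adj x y) (c * phi x y)
  = c * \sum_(x <- Om) \sum_(y <- r | adj x y) phi x y.
  by move=> r; rewrite mulr_sumr; apply: eq_bigr => x _; rewrite mulr_sumr.
rewrite !E; lra.
Qed.

Lemma Qext phi1 phi2 : (forall x y, phi1 x y = phi2 x y) -> Q phi1 = Q phi2.
Proof.
move=> H; have -> : phi1 = phi2 by apply: funext => x; apply: funext => y; exact: H.
by [].
Qed.

Lemma dirQ (f : pt n -> R) : dirichlet Om f = Q (fun x y => (f y - f x) ^+ 2).
Proof. by []. Qed.

Lemma adjC (x y : pt n) : adj x y = adj y x.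
Proof.
rewrite /adj; congr (_ == _); apply: eq_bigr => i _.
by rewrite -abszN opprB.
Qed.

Lemma Qpr {b w : pt n -> R} : (forall y, y \in bdry Om -> w y = 0) ->
  Q (fun x y => (b y - b x) * (w y - w x)) = - \sum_(x <- Om) w x * lat_lap Om b x.
Proof.
move=> Hw; rewrite /Q /lat_lap /lat_closure.
have -> : \sum_(x <- Om) w x * \sum_(y <- Om ++ bdry Om | adj x y) (b y - b x)
  = \sum_(x <- Om) (w x * \sum_(y <- Om | adj x y) (b y - b x)
      + w x * \sum_(y <- bdry Om | adj x y) (b y - b x)).
  by apply: eq_bigr => x _; rewrite big_cat /= mulrDr.
rewrite big_split /= opprD.
have E2 : \sum_(x <- Om) \sum_(y <- bdry Om | adj x y) (b y - b x) * (w y - w x)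
  = - \sum_(i <- Om) w i * \sum_(i0 <- bdry Om | adj i i0) (b i0 - b i).
  rewrite -sumrN; apply: eq_bigr => x _; rewrite mulr_sumr -sumrN.
  rewrite big_seq_cond [RHS]big_seq_cond; apply: eq_bigr => y /andP[yb _].
  rewrite Hw //; ring.
set T := \sum_(i <- Om) w i * \sum_(i0 <- Om | adj i i0) (b i0 - b i).
have HT : T = \sum_(x <- Om) \sum_(y <- Om | adj x y) w x * (b y - b x).
  by rewrite /T; apply: eq_bigr => x _; rewrite mulr_sumr.
have HT' : \sum_(x <- Om) \sum_(y <- Om | adj x y) w y * (b y - b x) = - T.
  rewrite HT.
  under eq_bigr => x _ do rewrite big_mkcond.
  rewrite exchange_big -sumrN; apply: eq_bigr => y _.
  rewrite -sumrN [RHS]big_mkcond; apply: eq_bigr => x _.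
  rewrite adjC; case: (adj y x) => //=.
  ring.
have E1 : \sum_(x <- Om) \sum_(y <- Om | adj x y) (b y - b x) * (w y - w x)
  = \sum_(x <- Om) \sum_(y <- Om | adj x y) w y * (b y - b x) - T.
  rewrite HT -sumB; apply: eq_bigr => x _; rewrite -sumB; apply: eq_bigr => y _; ring.
rewrite E1 E2 HT'; lra.
Qed.

Lemma lip1 {a b : R} : a <= b -> b <= 0 -> 0 <= expR b - expR a <= b - a.
Proof.
move=> ab b0.
have e1 : expR a = expR b * expR (a - b) by rewrite -expRD; congr expR; ring.
have h1 := expR_ge1Dx (a - b).
have h2 : expR (a - b) <= 1 by rewrite expR_le1; lra.
have h3 : expR b <= 1 by rewrite expR_le1.
have h4 := expR_gt0 b.
rewrite e1; apply/andP; split; nra.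
Qed.

Lemma lip {a b : R} : a <= 0 -> b <= 0 -> (expR b - expR a) ^+ 2 <= (b - a) ^+ 2.
Proof.
move=> a0 b0; case: (leP a b) => ab.
  have /andP[h1 h2] := lip1 ab b0; rewrite !expr2; nra.
have /andP[h1 h2] := lip1 (ltW ab) a0; rewrite !expr2; nra.
Qed.

Lemma core {lam a b : R} : 0 < lam -> a <= 0 -> b <= 0 ->
  lam / 2 * (expR b - 1) ^+ 2 - lam / 2 * (expR a - 1) ^+ 2
  - (b - a) * (lam * expR a * (expR a - 1)) <= lam / 2 * (b - a) ^+ 2.
Proof.
move=> l0 a0 b0.
have L := lip a0 b0.
have s0 := expR_gt0 a.
have s1 : expR a <= 1 by rewrite expR_le1.
have et : expR b = expR a * expR (b - a) by rewrite -expRD; congr expR; ring.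
have ed := expR_ge1Dx (b - a).
have t1 : expR a * (1 + (b - a)) <= expR b by rewrite et; apply: ler_wpM2l; lra.
clear et ed; move: L s0 s1 t1; move: (expR a) (expR b) => s t L s0 s1 t1.
have id : forall c, lam = c * 2 -> c * (t - 1) ^+ 2 - c * (s - 1) ^+ 2 - (b - a) * (lam * s * (s - 1))
  = c * (t - s) ^+ 2 + lam * (s - 1) * (t - s - s * (b - a)) by move=> c ->; ring.
rewrite (id (lam / 2)); last lra.
have p1 : lam * (s - 1) * (t - s - s * (b - a)) <= 0.
  apply: mulr_le0_ge0; [nra | nra].
have p2 : lam / 2 * (t - s) ^+ 2 <= lam / 2 * (b - a) ^+ 2.
  by apply: ler_wpM2l; [lra | exact: L].
lra.
Qed.

Lemma pointwise {lam K g a b L : R} : 0 < lam -> 2 * lam < K -> a <= 0 -> b <= 0 ->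
  L - K * b = lam * expR a * (expR a - 1) + g - K * a ->
  (lam / 2 * (expR b - 1) ^+ 2 + g * b) - (lam / 2 * (expR a - 1) ^+ 2 + g * a)
  - (b - a) * L <= 0.
Proof.
move=> l0 lK a0 b0 E.
have C := core l0 a0 b0.
have HL : L = K * (b - a) + lam * expR a * (expR a - 1) + g by lra.
rewrite HL.
have sq : 0 <= (b - a) ^+ 2 by apply: sqr_ge0.
have : (lam / 2 - K) * (b - a) ^+ 2 <= 0 by apply: mulr_le0_ge0; lra.
rewrite !expr2 in C sq * => H; nra.
Qed.

Lemma step {lam K : R} {g a b : pt n -> R} :
  0 < lam -> 2 * lam < K ->
  (forall x, x \in Om -> a x <= 0) -> (forall x, x \in Om -> b x <= 0) ->
  (forall y, y \in bdry Om -> a y = 0) -> (forall y, y \in bdry Om -> b y = 0) ->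
  (forall x, x \in Om -> lat_lap Om b x - K * b x
     = lam * expR (a x) * (expR (a x) - 1) + g x - K * a x) ->
  energyF Om lam g b <= energyF Om lam g a.
Proof.
move=> l0 lK an bn ab bb E.
pose w := fun x => b x - a x.
have Hw : forall y, y \in bdry Om -> w y = 0 by move=> y yb; rewrite /w ab // bb // subrr.
have Da : dirichlet Om a = dirichlet Om b + (-2) * Q (fun x y => (b y - b x) * (w y - w x))
   + dirichlet Om w.
  rewrite !dirQ -QZ -!QD; apply: Qext => x y; rewrite /w; ring.
have Dw : 0 <= dirichlet Om w.
  rewrite /dirichlet; apply: addr_ge0; first apply: mulr_ge0.
  - by rewrite invr_ge0.
  - by apply: sumr_ge0 => x _; apply: sumr_ge0 => y _; apply: sqr_ge0.
  - by apply: sumr_ge0 => x _; apply: sumr_ge0 => y _; apply: sqr_ge0.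
have QP := Qpr (b:=b) Hw.
have S : \sum_(x <- Om) (lam / 2 * (expR (b x) - 1) ^+ 2 + g x * b x)
   - \sum_(x <- Om) (lam / 2 * (expR (a x) - 1) ^+ 2 + g x * a x)
   - \sum_(x <- Om) w x * lat_lap Om b x <= 0.
  rewrite -!sumB big_seq; apply: sumr_le0 => x xO.
  exact: (pointwise l0 lK (an x xO) (bn x xO) (E x xO)).
rewrite /energyF; lra.
Qed.

Lemma argmax (T : eqType) (f : T -> R) (s : seq T) : s != [::] ->
  exists2 x, x \in s & forall y, y \in s -> f y <= f x.
Proof.
elim: s => [//|z s IH] _.
case: (eqVneq s [::]) => [->|sn].
  by exists z; rewrite ?mem_seq1 // => y; rewrite mem_seq1 => /eqP->.
have [x xs Hx] := IH sn.
case: (leP (f z) (f x)) => h.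
  exists x; first by rewrite in_cons xs orbT.
  by move=> y; rewrite in_cons => /orP[/eqP->|]; [|exact: Hx].
exists z; first by rewrite in_cons eqxx.
move=> y; rewrite in_cons => /orP[/eqP->|/Hx]; [by []|move=> hy; apply: le_trans hy _; exact: ltW].
Qed.

Lemma maxp {lam K : R} {g a b : pt n -> R} :
  0 < lam -> 2 * lam < K -> (forall x, 0 <= g x) ->
  (forall x, x \in Om -> a x <= 0) -> (forall y, y \in bdry Om -> b y = 0) ->
  (forall x, x \in Om -> lat_lap Om b x - K * b x
     = lam * expR (a x) * (expR (a x) - 1) + g x - K * a x) ->
  forall x, x \in Om -> b x <= 0.
Proof.
move=> l0 lK g0 an bb E x xO.
have On : Om != [::] by case: Om xO.
have [x0 x0O Hm] := argmax _ b _ On.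
suff : b x0 <= 0 by move=> h; apply: le_trans (Hm x xO) h.
case: (leP (b x0) 0) => // pos.
have Lap : lat_lap Om b x0 <= 0.
  rewrite /lat_lap big_seq_cond; apply: sumr_le0 => y /andP[yin _].
  rewrite subr_le0; move: yin; rewrite mem_cat => /orP[yO|yB].
    exact: Hm.
  by rewrite bb //; apply: ltW.
have E0 := E x0 x0O.
have a0 := an x0 x0O.
have g00 := g0 x0.
set s := a x0 in E0 a0.
have e1 := expR_ge1Dx s.
have e2 : expR s <= 1 by rewrite expR_le1.
have e3 := expR_gt0 s.
have h1 : s <= expR s * (expR s - 1) by nra.
have h2 : lam * s <= lam * expR s * (expR s - 1) by rewrite -mulrA; apply: ler_wpM2l; lra.
nra.
Qed.

End Aux.

Theorem lemma3p5 (R : realType) (n : nat) (hn : (2 <= n)%N) (lam : R) (hlam : 0 < lam)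
    (C : R) :
  exists c0 : R,
  forall (M : nat) (p : 'I_M -> pt n) (m : 'I_M -> nat),
    injective p -> (forall j, (0 < m j)%N) ->
    C = 4 * pi * \sum_(j < M) (m j)%:R ->
  forall (Om0 Om : seq (pt n)),
    uniq Om0 -> (forall j, p j \in Om0) ->
    uniq Om -> lat_connected Om -> (forall x, x \in Om0 -> x \in Om) ->
  forall (K : R), 2 * lam < K ->
  forall u : nat -> pt n -> R,
    (forall x, u 0%N x = 0) ->
    (forall k : nat, (1 <= k)%N -> forall x, x \in Om ->
       lat_lap Om (u k) x - K * u k x =
       lam * expR (u k.-1 x) * (expR (u k.-1 x) - 1) + gsrc R p m x - K * u k.-1 x) ->
    (forall k : nat, (1 <= k)%N -> forall x, x \in bdry Om -> u k x = 0) ->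
  energyF Om lam (gsrc R p m) (u 1%N) <= c0 /\
  (forall k : nat, (1 <= k)%N ->
     energyF Om lam (gsrc R p m) (u k.+1) <= energyF Om lam (gsrc R p m) (u k)).
Proof.
exists 0 => M p m _ _ _ Om0 Om _ _ _ _ _ K lK u u0 E B.
have g0 : forall x, 0 <= gsrc R p m x.
  move=> x; rewrite /gsrc; apply: mulr_ge0; first (apply: mulr_ge0; [by [] | exact: pi_ge0]).
  by apply: sumr_ge0 => j _; apply: mulr_ge0; apply: ler0n.
have bd : forall k y, y \in bdry Om -> u k y = 0.
  by case=> [|k] y yb; [exact: u0 | exact: B].
have neg : forall k x, x \in Om -> u k x <= 0.
  elim=> [|k IH] x xO; first by rewrite u0.
  apply: (@maxp R n Om lam K _ _ _ hlam lK g0 IH (bd k.+1) _ x xO).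
  by move=> z zO; apply: (E k.+1).
have st : forall k, energyF Om lam (gsrc R p m) (u k.+1) <= energyF Om lam (gsrc R p m) (u k).
  move=> k; apply: (@step R n Om lam K _ _ _ hlam lK (neg k) (neg k.+1) (bd k) (bd k.+1)).
  by move=> z zO; apply: (E k.+1).
split; last by move=> k _; exact: st.
have -> : 0 = energyF Om lam (gsrc R p m) (u 0%N).
  have -> : u 0%N = (fun _ => 0) by apply: funext => x; exact: u0.
  rewrite /energyF /dirichlet.
  rewrite !big1 //.
  - lra.
  - by move=> x _; rewrite expR0 subrr expr2 !mulr0 addr0.
  - by move=> x _; rewrite big1 // => y _; rewrite subrr expr2 mulr0.
  - by move=> x _; rewrite big1 // => y _; rewrite subrr expr2 mulr0.
exact: st.
Qed.
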